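(* Let $M$ be a $3$-connected matroid, let $\mathcal{T}$ be a tangle of $M$, and let $X,X'$ be long lines of the tangle matroid $M(\mathcal{T})$ such that $\rank_{\mathcal{T}}(X\cup X')=4$. Let $e\in X$ and $M'\in\{M\setminus e, M/e\}$ be such that $M'$ is $3$-connected, and let $\mathcal{T}'$ be the tangle of $M'$ inherited from $\mathcal{T}$. Then $X'$ is closed in the tangle matroid $M'(\mathcal{T}')$.
   Context: $\lambda_M(X) = \rank_M(X) + \rank_M(E(M)\setminus X) - \rank(M)$. A tangle of order $\theta$ of $M$ is a collection $\mathcal{T}$ of subsets of $E(M)$ such that: (i) $\lambda_M(X)<\theta$ for all $X\in\mathcal{T}$; (ii) for every $X\subseteq E(M)$ with $\lambda_M(X)<\theta$, either $X\in\mathcal{T}$ or $E(M)\setminus X\in\mathcal{T}$; (iii) if $X,Y,Z\in\mathcal{T}$ then $X\cup Y\cup Z\neq E(M)$; (iv) $E(M)\setminus\{e\}\notin\mathcal{T}$ for every $e\in E(M)$. The tangle matroid $M(\mathcal{T})$ has rank function $\rank_{\mathcal{T}}(X) = \min\{\lambda_M(Y): X\subseteq Y\in\mathcal{T}\}$ if some member of $\mathcal{T}$ contains $X$, and $\theta$ otherwise. A long line is a closed set of rank $2$ with at least $3$ elements. For a minor $N$ of $M$ with $S=E(M)\setminus E(N)$, the tangle of $N$ inherited from $\mathcal{T}$ is $\{X\setminus S: X\in\mathcal{T},\ \lambda_N(X\setminus S)<\theta-|S|\}$, a tangle of $N$ of order $\theta-|S|$. *)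

(* Defs.v *)
From mathcomp Require Import all_boot.
Set Implicit Arguments. Unset Strict Implicit. Unset Printing Implicit Defensive.

Section Matroids.
Variable T : finType.

Definition is_matroid (E : {set T}) (r : {set T} -> nat) : Prop :=
  [/\ (forall X : {set T}, X \subset E -> r X <= #|X|),
      (forall X Y : {set T}, X \subset Y -> Y \subset E -> r X <= r Y) &
      (forall X Y : {set T}, X \subset E -> Y \subset E ->
         r (X :|: Y) + r (X :&: Y) <= r X + r Y)].

Definition conn (E : {set T}) (r : {set T} -> nat) (X : {set T}) : nat :=
  r X + r (E :\: X) - r E.

Definition three_connected (E : {set T}) (r : {set T} -> nat) : Prop :=
  forall (X : {set T}) (k : nat), X \subset E -> 1 <= k < 3 ->
    k <= #|X| -> k <= #|E :\: X| -> k <= conn E r X.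

Definition is_tangle (E : {set T}) (r : {set T} -> nat) (theta : nat)
  (Tg : {set {set T}}) : Prop :=
  [/\ (forall X : {set T}, X \in Tg -> X \subset E),
      (forall X : {set T}, X \in Tg -> conn E r X < theta),
      (forall X : {set T}, X \subset E -> conn E r X < theta -> X \in Tg \/ (E :\: X) \in Tg),
      (forall X Y Z : {set T}, X \in Tg -> Y \in Tg -> Z \in Tg -> X :|: Y :|: Z <> E) &
      (forall e : T, e \in E -> (E :\ e) \notin Tg)].

Definition tangle_rank (E : {set T}) (r : {set T} -> nat) (theta : nat)
  (Tg : {set {set T}}) (X : {set T}) : nat :=
  if [exists Y in Tg, X \subset Y]
  then \big[minn/theta]_(Y in Tg | X \subset Y) conn E r Y
  else theta.

Definition mat_closed (E : {set T}) (rk : {set T} -> nat) (X : {set T}) : Prop :=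
  forall f : T, f \in E -> f \notin X -> rk X < rk (f |: X).

Definition long_line (E : {set T}) (rk : {set T} -> nat) (X : {set T}) : Prop :=
  [/\ X \subset E, mat_closed E rk X, rk X = 2 & 3 <= #|X|].

(* rank function of M \ e (del = true) or M / e (del = false);
   the ground set of either minor is E :\ e *)
Definition minor_rank (r : {set T} -> nat) (e : T) (del : bool) :
  {set T} -> nat :=
  fun X => if del then r X else r (e |: X) - r [set e].

Definition inherited_tangle (E : {set T}) (r : {set T} -> nat) (e : T)
  (del : bool) (theta : nat) (Tg : {set {set T}}) : {set {set T}} :=
  [set X :\ e | X in Tg & conn (E :\ e) (minor_rank r e del) (X :\ e) < theta - 1].

End Matroids.

(* Main.v *)
Require Import Defs.
From mathcomp Require Import all_boot zify.
Set Implicit Arguments. Unset Strict Implicit. Unset Printing Implicit Defensive.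

Ltac fin_tac := repeat (case: (_ \in _)); rewrite /= ?andbT ?andbF ?orbT ?orbF //;
   repeat match goal with
   | |- (is_true true -> is_true false) -> _ => let H := fresh in move=> H; by have := H isT
   | |- is_true false -> _ => by []
   | |- _ -> _ => move=> _ end; done.
Ltac sets_tac :=
  let x := fresh "x" in apply/setP => x; rewrite ?inE;
  repeat match goal with H : is_true (?A \subset ?B) |- _ => move/subsetP: H => /(_ x); rewrite ?inE end;
  fin_tac.

Ltac sets_e e := let x := fresh "x" in apply/setP => x; rewrite ?inE;
  repeat match goal with H : is_true (?A \subset ?B) |- _ => move/subsetP: H => /(_ x); rewrite ?inE end;
  repeat match goal with H : is_true (e \in _) |- _ => move: H | H : is_true (~~ (e \in _)) |- _ => move: H end;
  case: (eqVneq x e) => [->|_]; rewrite ?inE ?eqxx /=; fin_tac.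

Lemma ms1 (T : finType) (E S : {set T}) e : e \in E -> e \notin S -> S \subset E ->
  S \subset E :\ e -> E :\: (e |: S) = E :\ e :\: S.
Proof. move=> he heS hSE hS; sets_e e. Qed.

Lemma ms2 (T : finType) (E S : {set T}) e : e \in E -> e \notin S -> S \subset E ->
  S \subset E :\ e -> e |: (E :\ e :\: S) = E :\: S.
Proof. move=> he heS hSE hS; sets_e e. Qed.

Lemma ms3 (T : finType) (E S : {set T}) e : e \in E -> e \notin S -> S \subset E ->
  S \subset E :\ e -> e |: (E :\ e) = E.
Proof. move=> he heS hSE hS; sets_e e. Qed.

Lemma ms4 (T : finType) (E S : {set T}) e : e \in E -> e \notin S -> S \subset E ->
  S \subset E :\ e -> (e |: S) :|: (E :\ e) = E.
Proof. move=> he heS hSE hS; sets_e e. Qed.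

Lemma ms5 (T : finType) (E S : {set T}) e : e \in E -> e \notin S -> S \subset E ->
  S \subset E :\ e -> (e |: S) :&: (E :\ e) = S.
Proof. move=> he heS hSE hS; sets_e e. Qed.

Lemma ms6 (T : finType) (E S : {set T}) e : e \in E -> e \notin S -> S \subset E ->
  S \subset E :\ e -> (E :\: S) :|: (E :\ e) = E.
Proof. move=> he heS hSE hS; sets_e e. Qed.

Lemma ms7 (T : finType) (E S : {set T}) e : e \in E -> e \notin S -> S \subset E ->
  S \subset E :\ e -> (E :\: S) :&: (E :\ e) = E :\ e :\: S.
Proof. move=> he heS hSE hS; sets_e e. Qed.

Lemma ms8 (T : finType) (E S : {set T}) e : e \in E -> e \notin S -> S \subset E ->
  S \subset E :\ e -> S :|: (E :\ e :\: S) = E :\ e.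
Proof. move=> he heS hSE hS; sets_e e. Qed.

Lemma ms9 (T : finType) (E S : {set T}) e : e \in E -> e \notin S -> S \subset E ->
  S \subset E :\ e -> S :&: (E :\ e :\: S) = set0.
Proof. move=> he heS hSE hS; sets_e e. Qed.

Lemma ms10 (T : finType) (E S : {set T}) e : e \in E -> e \notin S -> S \subset E ->
  S \subset E :\ e -> (e |: S) :|: (E :\: S) = E.
Proof. move=> he heS hSE hS; sets_e e. Qed.

Lemma ms11 (T : finType) (E S : {set T}) e : e \in E -> e \notin S -> S \subset E ->
  S \subset E :\ e -> (e |: S) :&: (E :\: S) = [set e].
Proof. move=> he heS hSE hS; sets_e e. Qed.

Lemma ns1 (T : finType) (E A Z : {set T}) e : e \in E -> e \in Z -> Z \subset E ->
  A \subset E :\ e -> A \subset E :\: Z -> (E :\ e) :\: (Z :\ e) = E :\: Z.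
Proof. move=> he heZ hZ hA hAZ; sets_e e. Qed.

Lemma ns2 (T : finType) (E A Z : {set T}) e : e \in E -> e \in Z -> Z \subset E ->
  A \subset E :\ e -> A \subset E :\: Z -> (E :\ e :\: A) :|: Z = E :\: A.
Proof. move=> he heZ hZ hA hAZ; sets_e e. Qed.

Lemma ns3 (T : finType) (E A Z : {set T}) e : e \in E -> e \in Z -> Z \subset E ->
  A \subset E :\ e -> A \subset E :\: Z -> (E :\ e :\: A) :&: Z = Z :\ e.
Proof. move=> he heZ hZ hA hAZ; sets_e e. Qed.

Lemma ns4 (T : finType) (E A Z : {set T}) e : e \in E -> e \in Z -> Z \subset E ->
  A \subset E :\ e -> A \subset E :\: Z -> (Z :\ e) :|: (E :\: Z) = E :\ e.
Proof. move=> he heZ hZ hA hAZ; sets_e e. Qed.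

Lemma ns5 (T : finType) (E A Z : {set T}) e : e \in E -> e \in Z -> Z \subset E ->
  A \subset E :\ e -> A \subset E :\: Z -> (Z :\ e) :&: (E :\: Z) = set0.
Proof. move=> he heZ hZ hA hAZ; sets_e e. Qed.

Lemma ns6 (T : finType) (E A Z : {set T}) e : e \in E -> e \in Z -> Z \subset E ->
  A \subset E :\ e -> A \subset E :\: Z -> (e |: A) :|: (E :\: Z) = e |: (E :\: Z).
Proof. move=> he heZ hZ hA hAZ; sets_e e. Qed.

Lemma ns7 (T : finType) (E A Z : {set T}) e : e \in E -> e \in Z -> Z \subset E ->
  A \subset E :\ e -> A \subset E :\: Z -> (e |: A) :&: (E :\: Z) = A.
Proof. move=> he heZ hZ hA hAZ; sets_e e. Qed.

Lemma ns8 (T : finType) (E A Z : {set T}) e : e \in E -> e \in Z -> Z \subset E ->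
  A \subset E :\ e -> A \subset E :\: Z -> Z :|: (e |: (E :\: Z)) = E.
Proof. move=> he heZ hZ hA hAZ; sets_e e. Qed.

Lemma ns9 (T : finType) (E A Z : {set T}) e : e \in E -> e \in Z -> Z \subset E ->
  A \subset E :\ e -> A \subset E :\: Z -> Z :&: (e |: (E :\: Z)) = [set e].
Proof. move=> he heZ hZ hA hAZ; sets_e e. Qed.

Lemma arD (rA rEA rE rEeA rEe rZ rEZ rZe r0 : nat) :
  rEA + rZe <= rEeA + rZ -> rEe + r0 <= rZe + rEZ -> rE <= rA + rEA -> rE <= rZ + rEZ ->
  rEe + r0 <= rA + rEeA ->
  rA + rEeA - rEe < rA + rEA - rE -> rZ + rEZ - rE <= rZe + rEZ - rEe -> False.
Proof. lia. Qed.

Lemma arC (rA rEA rE reA c rZ rEZ reEZ : nat) :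
  reEZ + rA <= reA + rEZ -> rE + c <= rZ + reEZ -> rE + c <= reA + rEA ->
  c <= reA -> c <= rEA -> c <= rZ -> c <= rE -> c <= reEZ ->
  rE <= rA + rEA -> rE <= rZ + rEZ ->
  reA - c + (rEA - c) - (rE - c) < rA + rEA - rE ->
  rZ + rEZ - rE <= rZ - c + (reEZ - c) - (rE - c) -> False.
Proof. lia. Qed.

Lemma mc1D (s x y b d : nat) : d + x <= b + y -> s + x - y <= s + b - d.
Proof. lia. Qed.
Lemma mc1C (a b c d s : nat) : a <= s + c -> c <= a -> c <= b -> c <= d ->
  a - c + (b - c) - (d - c) <= s + b - d.
Proof. lia. Qed.
Lemma mc2D (s x y a d : nat) : d + s <= a + y -> s + x - y <= a + x - d.
Proof. lia. Qed.
Lemma mc2C (a b c d x : nat) : b <= x + c -> c <= a -> c <= b -> c <= d ->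
  a - c + (b - c) - (d - c) <= a + x - d.
Proof. lia. Qed.
Lemma mc3D (a s x y d : nat) : a <= s + 1 -> y <= d -> y <= s + x ->
  a + x - d <= s + x - y + 1.
Proof. lia. Qed.
Lemma mc3C (a b c d x : nat) : x <= b -> c <= 1 -> d + c <= a + b -> c <= a -> c <= b -> c <= d ->
  a + x - d <= a - c + (b - c) - (d - c) + 1.
Proof. lia. Qed.

Section M.
Variable T : finType.
Variables (E : {set T}) (r : {set T} -> nat).
Hypothesis hM : is_matroid E r.
Implicit Types X Y U I A B : {set T}.

Lemma r_sub X Y : X \subset E -> Y \subset E -> r (X :|: Y) + r (X :&: Y) <= r X + r Y.
Proof. by case: hM => _ _ H; apply: H. Qed.
Lemma r_mono X Y : X \subset Y -> Y \subset E -> r X <= r Y.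
Proof. by case: hM => _ H _; apply: H. Qed.
Lemma r_card X : X \subset E -> r X <= #|X|.
Proof. by case: hM => H _ _; apply: H. Qed.

Lemma r_sub' X Y U I : X \subset E -> Y \subset E -> X :|: Y = U -> X :&: Y = I ->
  r U + r I <= r X + r Y.
Proof. by move=> hX hY <- <-; apply: r_sub. Qed.

Lemma conn_comp X : X \subset E -> r E <= r X + r (E :\: X).
Proof.
move=> hX; have := r_sub' hX (subsetDl E X) (_ : _ = E) (_ : _ = set0).
have h1 : X :|: E :\: X = E by sets_tac.
have h2 : X :&: (E :\: X) = set0 by sets_tac.
move=> /(_ h1 h2); lia.
Qed.

Lemma conn_submod A B : A \subset E -> B \subset E ->
  conn E r (A :|: B) + conn E r (A :&: B) <= conn E r A + conn E r B.
Proof.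
move=> hA hB; rewrite /conn.
have hAB : A :|: B \subset E by rewrite subUset hA.
have hAB' : A :&: B \subset E by apply: subset_trans (subsetIl _ _) hA.
have := conn_comp hAB; have := conn_comp hAB'.
have h1 := r_sub hA hB.
have h2 := r_sub (subsetDl E A) (subsetDl E B).
have e1 : (E :\: A) :|: (E :\: B) = E :\: (A :&: B) by sets_tac.
have e2 : (E :\: A) :&: (E :\: B) = E :\: (A :|: B) by sets_tac.
rewrite e1 e2 in h2.
lia.
Qed.


Lemma r1 e : e \in E -> r [set e] <= 1.
Proof. by move=> he; have := r_card (_ : [set e] \subset E); rewrite cards1; apply; rewrite sub1set. Qed.

Lemma r_add1' e (S : {set T}) : e \in E -> S \subset E -> r (e |: S) <= r S + r [set e].
Proof.
move=> he hS; have h := r_sub (_ : [set e] \subset E) hS.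
rewrite sub1set he in h; have := h isT; lia.
Qed.

Lemma r_add1 e (S : {set T}) : e \in E -> S \subset E -> r (e |: S) <= r S + 1.
Proof.
move=> he hS; have h := r_sub' (_ : [set e] \subset E) hS erefl erefl.
have := r1 he; rewrite sub1set he in h; have := h isT; lia.
Qed.

Section Minor.
Variable e : T.
Hypothesis he : e \in E.
Variable S : {set T}.
Hypothesis hS : S \subset E :\ e.

Let hSE : S \subset E. Proof. exact: subset_trans hS (subsetDl _ _). Qed.
Let heS : e \notin S. Proof. by apply/negP => /(subsetP hS); rewrite !inE eqxx. Qed.
Let hES : E :\: S \subset E. Proof. exact: subsetDl. Qed.
Let hEe : E :\ e \subset E. Proof. exact: subsetDl. Qed.
Let hEeS : E :\ e :\: S \subset E. Proof. exact: subset_trans (subsetDl _ _) hEe. Qed.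
Let heSE : e |: S \subset E. Proof. by rewrite subUset sub1set he hSE. Qed.
Let h1E : [set e] \subset E. Proof. by rewrite sub1set. Qed.

Let EeS : E :\: (e |: S) = E :\ e :\: S. Proof. exact: (ms1 he heS hSE hS). Qed.
Let eES : e |: (E :\ e :\: S) = E :\: S. Proof. exact: (ms2 he heS hSE hS). Qed.
Let eE : e |: (E :\ e) = E. Proof. exact: (ms3 he heS hSE hS). Qed.

Let f1 : r E + r S <= r (e |: S) + r (E :\ e).
Proof. by exact: (r_sub' heSE hEe (ms4 he heS hSE hS) (ms5 he heS hSE hS)). Qed.

Let f2 : r (E :\: S) + r S >= 0. Proof. by []. Qed.

Let f3 : r E + r (E :\ e :\: S) <= r (E :\: S) + r (E :\ e).
Proof.
by exact: (r_sub' hES hEe (ms6 he heS hSE hS) (ms7 he heS hSE hS)).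
Qed.
Let f4 : r (E :\: S) <= r (E :\ e :\: S) + 1.
Proof. by rewrite -eES; apply: r_add1. Qed.
Let f5 : r (E :\ e) <= r E. Proof. exact: r_mono. Qed.
Let f6 : r (e |: S) <= r S + 1. Proof. exact: r_add1. Qed.
Let f7 : r S <= r (e |: S). Proof. by apply: r_mono => //; apply: subsetUr. Qed.
Let f8 : r (E :\ e :\: S) <= r (E :\: S). Proof. by apply: r_mono => //; rewrite -eES subsetUr. Qed.
Let f9 : r (E :\ e) <= r S + r (E :\ e :\: S).
Proof.
have := (r_sub' hSE hEeS (ms8 he heS hSE hS) (ms9 he heS hSE hS)); lia.
Qed.
Let f10 : r E <= r S + r (E :\: S). Proof. exact: conn_comp. Qed.
Let f11 : r E + r [set e] <= r (e |: S) + r (E :\: S).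
Proof.
by exact: (r_sub' heSE hES (ms10 he heS hSE hS) (ms11 he heS hSE hS)).
Qed.
Let f12 : r [set e] <= 1. Proof. exact: r1. Qed.
Let f13 : r [set e] <= r (e |: S). Proof. by apply: r_mono => //; rewrite sub1set setU11. Qed.
Let f14 : r [set e] <= r (E :\: S). Proof. by apply: r_mono => //; rewrite sub1set !inE he (negbTE heS). Qed.
Let f15 : r (E :\: S) <= r E. Proof. exact: r_mono. Qed.
Let f16 : r (e |: S) <= r S + r [set e]. Proof. exact: r_add1'. Qed.
Let f17 : r (E :\: S) <= r (E :\ e :\: S) + r [set e]. Proof. by rewrite -eES; apply: r_add1'. Qed.

Let f18 : r [set e] <= r E. Proof. exact: leq_trans f14 f15. Qed.

Lemma mc1 del : conn (E :\ e) (minor_rank r e del) S <= conn E r S.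
Proof.
rewrite /conn /minor_rank; case: del; last rewrite eES eE.
  exact: mc1D f3.
exact: mc1C f16 f13 f14 f18.
Qed.

Lemma mc2 del : conn (E :\ e) (minor_rank r e del) S <= conn E r (e |: S).
Proof.
rewrite /conn /minor_rank EeS; case: del; last rewrite eES eE.
  exact: mc2D f1.
exact: mc2C f17 f13 f14 f18.
Qed.

Lemma mc3 del : conn E r (e |: S) <= conn (E :\ e) (minor_rank r e del) S + 1.
Proof.
rewrite /conn /minor_rank EeS; case: del; last rewrite eES eE.
  exact: mc3D f6 f5 f9.
exact: mc3C f8 f12 f11 f13 f14 f18.
Qed.

End Minor.

Section Final.
Variables (e : T) (A Z : {set T}).
Hypotheses (he : e \in E) (heZ : e \in Z) (hZ : Z \subset E) (hA : A \subset E :\ e)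
  (hAZ : A \subset E :\: Z).

Lemma mfinal del :
  conn (E :\ e) (minor_rank r e del) A < conn E r A ->
  conn E r Z <= conn (E :\ e) (minor_rank r e del) (Z :\ e) -> False.
Proof.
have hAE : A \subset E by apply: subset_trans hA (subsetDl _ _).
have heA : e \notin A by apply/negP => /(subsetP hA); rewrite !inE eqxx.
have hEe : E :\ e \subset E by apply: subsetDl.
have hEeA : E :\ e :\: A \subset E by apply: subset_trans (subsetDl _ _) hEe.
have hEA : E :\: A \subset E by apply: subsetDl.
have hEZ : E :\: Z \subset E by apply: subsetDl.
have hZe : Z :\ e \subset E by apply: subset_trans (subsetDl _ _) hZ.
have heAE : e |: A \subset E by rewrite subUset sub1set he hAE.
have heEZ : e |: (E :\: Z) \subset E by rewrite subUset sub1set he hEZ.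
have n1 := ns1 he heZ hZ hA hAZ.
have n8 : e |: (Z :\ e) = Z by rewrite setD1K.
have g5 := conn_comp hAE.
have g6 := conn_comp hZ.
rewrite /conn /minor_rank n1; case: del.
  have g1 := r_sub' hEeA hZ (ns2 he heZ hZ hA hAZ) (ns3 he heZ hZ hA hAZ).
  have g2 := r_sub' hZe hEZ (ns4 he heZ hZ hA hAZ) (ns5 he heZ hZ hA hAZ).
  have g7 := r_sub' hAE hEeA (ms8 he heA hAE hA) (ms9 he heA hAE hA).
  exact: arD g1 g2 g5 g6 g7.
have g3 := r_sub' heAE hEZ (ns6 he heZ hZ hA hAZ) (ns7 he heZ hZ hA hAZ).
have g4 := r_sub' hZ heEZ (ns8 he heZ hZ hA hAZ) (ns9 he heZ hZ hA hAZ).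
have g8 := r_sub' heAE hEA (ms10 he heA hAE hA) (ms11 he heA hAE hA).
have g9 : r [set e] <= r (e |: A) by apply: r_mono => //; rewrite sub1set setU11.
have g10 : r [set e] <= r (E :\: A) by apply: r_mono => //; rewrite sub1set !inE he heA.
have g11 : r [set e] <= r Z by apply: r_mono => //; rewrite sub1set.
have g12 : r [set e] <= r E by apply: r_mono => //; rewrite sub1set.
have g13 : r [set e] <= r (e |: (E :\: Z)) by apply: r_mono => //; rewrite sub1set setU11.
rewrite n8 (ms2 he heA hAE hA) (ms3 he heA hAE hA).
exact: arC g3 g4 g8 g9 g10 g11 g12 g13 g5 g6.
Qed.

End Final.

End M.

Lemma bigmin_le (I : eqType) (s : seq I) (P : pred I) (F : I -> nat) t i :
  i \in s -> P i -> \big[minn/t]_(j <- s | P j) F j <= F i.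
Proof.
elim: s => // x s IH; rewrite inE big_cons => /orP [/eqP <- -> | hi hP].
  exact: geq_minl.
by case: (P x); [apply: leq_trans (geq_minr _ _) (IH hi hP) | apply: IH].
Qed.

Section TR.
Variables (T : finType) (E : {set T}) (r : {set T} -> nat) (theta : nat) (Tg : {set {set T}}).
Implicit Types S Y W : {set T}.

Lemma TR1 S : tangle_rank E r theta Tg S <= theta.
Proof.
rewrite /tangle_rank; case: ifP => // _.
by apply: (big_rec (fun x => x <= theta)) => // i x _ hx; rewrite geq_min hx orbT.
Qed.

Lemma TR2 S Y : Y \in Tg -> S \subset Y -> tangle_rank E r theta Tg S <= conn E r Y.
Proof.
move=> hY hSY; rewrite /tangle_rank.
have -> : [exists Y0 in Tg, S \subset Y0] by apply/existsP; exists Y; rewrite hY hSY.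
by apply: bigmin_le; [rewrite mem_index_enum | rewrite hY hSY].
Qed.

Lemma TR3 S : tangle_rank E r theta Tg S < theta ->
  exists Y, [/\ Y \in Tg, S \subset Y & conn E r Y = tangle_rank E r theta Tg S].
Proof.
rewrite /tangle_rank; case: ifP => _; last by rewrite ltnn.
set b := \big[minn/theta]_(_ | _) _.
have : b = theta \/ exists Y, [/\ Y \in Tg, S \subset Y & conn E r Y = b].
  rewrite /b; apply: (big_ind (fun b => b = theta \/ exists Y, [/\ Y \in Tg, S \subset Y & conn E r Y = b])) => //; first by left.
    by move=> x y hx hy; rewrite /minn; case: ifP.
  by move=> Y /andP [hY hSY]; right; exists Y.
by case=> [->|//]; rewrite ltnn.
Qed.

End TR.

Section Tangle.
Variables (T : finType) (E : {set T}) (r : {set T} -> nat) (theta : nat) (Tg : {set {set T}}).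
Hypothesis hT : is_tangle E r theta Tg.
Implicit Types S Y W : {set T}.

Lemma T_sub Y : Y \in Tg -> Y \subset E.
Proof. by case: hT => H _ _ _ _; apply: H. Qed.

Lemma T_E : E \notin Tg.
Proof. by apply/negP => hE; case: hT => _ _ _ H _; apply: (H E E E hE hE hE); rewrite !setUid. Qed.

Lemma TC W Y1 Y2 : W \subset E -> conn E r W < theta -> Y1 \in Tg -> Y2 \in Tg ->
  W \subset Y1 :|: Y2 -> W \in Tg.
Proof.
move=> hW hc h1 h2 hWY; case: hT => T1 _ T3 T4 _.
case: (T3 W hW hc) => // hC; exfalso; apply: (T4 _ _ _ h1 h2 hC).
have := T1 _ h1; have := T1 _ h2; move=> s2 s1.
apply/setP => x; rewrite !inE.
case hx: (x \in Y1); first by rewrite (subsetP s1 x hx).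
case hx2: (x \in Y2); first by rewrite (subsetP s2 x hx2).
case hxW: (x \in W) => //=.
by have := subsetP hWY x hxW; rewrite inE hx hx2.
Qed.

Lemma TU S Y1 Y2 : Y1 \in Tg -> Y2 \in Tg -> S \subset Y1 :|: Y2 ->
  tangle_rank E r theta Tg S <= conn E r (Y1 :|: Y2).
Proof.
move=> h1 h2 hS; case: (leqP theta (conn E r (Y1 :|: Y2))) => hc.
  exact: leq_trans (TR1 _ _ _ _ _) hc.
apply: TR2 hS; apply: (TC _ hc h1 h2) => //.
by rewrite subUset !T_sub.
Qed.

Lemma Tcard Z : Z \in Tg -> 2 <= #|E :\: Z|.
Proof.
move=> hZ; have sZ := T_sub hZ; case: hT => _ _ _ _ T5.
rewrite leqNgt; apply/negP => hlt.
have : #|E :\: Z| = 0 \/ #|E :\: Z| = 1.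
  by move: hlt; case: #|E :\: Z| => [|[|]]; auto.
case=> [/eqP | /eqP /cards1P [x hx]].
  rewrite cards_eq0 => /eqP h0.
  have hZE : Z = E.
    apply/setP => y; apply/idP/idP => [/(subsetP sZ) //|hy].
    apply/negPn/negP => hyZ.
    have : y \in E :\: Z by rewrite inE hyZ hy.
    by rewrite h0 inE.
  by move: hZ; rewrite hZE (negbTE T_E).
have hxD : x \in E :\: Z by rewrite hx set11.
move: (hxD); rewrite inE => /andP [hxZ hxE].
have hZE : Z = E :\ x.
  apply/setP => y; rewrite !inE; case: (eqVneq y x) => [->|hyx] /=.
    by rewrite (negbTE hxZ).
  case hy: (y \in Z); first by rewrite (subsetP sZ y hy).
  case hyE: (y \in E) => //.
  have : y \in E :\: Z by rewrite inE hy hyE.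
  by rewrite hx inE (negbTE hyx).
by move: hZ; rewrite hZE (negbTE (T5 x hxE)).
Qed.

End Tangle.


Lemma conn'_le (T : finType) (E : {set T}) (r : {set T} -> nat) e del (Y : {set T}) :
  is_matroid E r -> e \in E -> Y \subset E ->
  conn (E :\ e) (minor_rank r e del) (Y :\ e) <= conn E r Y.
Proof.
move=> hM he sY.
have hS : Y :\ e \subset E :\ e by apply: setSD.
case heY : (e \in Y).
  by have := mc2 hM he hS del; rewrite setD1K.
have -> : Y :\ e = Y.
  by apply/setP => x; rewrite !inE; case: eqVneq => [->|] //=; rewrite heY.
by have := mc1 hM he hS del; rewrite (_ : Y :\ e = Y) //; apply/setP => x; rewrite !inE;
   case: eqVneq => [->|] //=; rewrite heY.
Qed.

Theorem lemma2p34 (T : finType) (E : {set T}) (r : {set T} -> nat)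
  (theta : nat) (Tg : {set {set T}}) (X X' : {set T}) (e : T) (del : bool) :
  is_matroid E r ->
  three_connected E r ->
  is_tangle E r theta Tg ->
  long_line E (tangle_rank E r theta Tg) X ->
  long_line E (tangle_rank E r theta Tg) X' ->
  tangle_rank E r theta Tg (X :|: X') = 4 ->
  e \in X ->
  three_connected (E :\ e) (minor_rank r e del) ->
  mat_closed (E :\ e) (tangle_rank (E :\ e) (minor_rank r e del) (theta - 1)
                     (inherited_tangle E r e del theta Tg)) X'.
Proof.
move=> hM h3 hT [XE Xcl rX cX] [X'E X'cl rX' cX'] rXX' heX h3'.
have ht4 : 4 <= theta by rewrite -rXX'; apply: TR1.
have ht2 : 2 < theta - 1 by rewrite ltn_subRL.
have heE : e \in E by apply: (subsetP XE).
have [Z [hZ hXZ lZ]] : exists Z, [/\ Z \in Tg, X \subset Z & conn E r Z = 2].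
  have := @TR3 _ E r theta Tg X; rewrite rX => H; apply: H.
  by apply: leq_trans ht4.
have heZ : e \in Z by apply: (subsetP hXZ).
have sZ := T_sub hT hZ.
have cZ := Tcard hT hZ.
have [Y0 [hY0 hX'Y0 lY0]] : exists Y, [/\ Y \in Tg, X' \subset Y & conn E r Y = 2].
  have := @TR3 _ E r theta Tg X'; rewrite rX' => H; apply: H.
  by apply: leq_trans ht4.
have K : forall Y, Y \in Tg -> X' \subset Y -> 4 + conn E r (Y :&: Z) <= conn E r Y + 2.
  move=> Y hY hX'Y.
  have sY := T_sub hT hY.
  have h4 : 4 <= conn E r (Y :|: Z).
    rewrite -rXX'; apply: (TU hT hY hZ).
    by rewrite setUC; apply: setUSS.
  have H := conn_submod hM sY sZ; rewrite lZ in H; apply: leq_trans _ H.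
  by rewrite leq_add2r.
have cIZ : forall Y, 2 <= #|E :\: (Y :&: Z)|.
  move=> Y; apply: leq_trans cZ _; apply: subset_leq_card; apply: setDS; exact: subsetIr.
have heX' : e \notin X'.
  apply/negP => heX'.
  have hk := K Y0 hY0 hX'Y0; rewrite lY0 in hk.
  have h1 : 1 <= conn E r (Y0 :&: Z).
    apply: h3 => //.
    - by apply: subset_trans (subsetIr _ _) sZ.
    - rewrite card_gt0; apply/set0Pn; exists e; rewrite inE heZ andbT.
      exact: (subsetP hX'Y0).
    - by apply: leq_trans _ (cIZ Y0).
  have : 4 + conn E r (Y0 :&: Z) <= 4 + 0 by rewrite addn0.
  by rewrite leq_add2l leqn0 => /eqP h0; rewrite h0 in h1.
move=> f hf hfX'.
set T' := inherited_tangle E r e del theta Tg.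
set l' := conn (E :\ e) (minor_rank r e del).
have hfE : f \in E by move: hf; rewrite inE => /andP [].
rewrite ltnNge; apply/negP => hle.
have hY0' : Y0 :\ e \in T'.
  apply/imsetP; exists Y0 => //; rewrite inE hY0 /=.
  apply: leq_ltn_trans (conn'_le del hM heE (T_sub hT hY0)) _.
  by rewrite lY0.
have r'X' : tangle_rank (E :\ e) (minor_rank r e del) (theta - 1) T' X' <= 2.
  apply: leq_trans (TR2 _ _ _ hY0' _) _; first by rewrite subsetD1 hX'Y0.
  by rewrite -lY0; apply: conn'_le => //; exact: (T_sub hT hY0).
have [Y' [hY' hfY' lY']] : exists Y', [/\ Y' \in T', f |: X' \subset Y' &
    l' Y' = tangle_rank (E :\ e) (minor_rank r e del) (theta - 1) T' (f |: X')].
  apply: TR3; apply: leq_ltn_trans hle _; apply: leq_ltn_trans r'X' _.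
  exact: ht2.
have lA' : l' Y' <= 2 by rewrite lY'; exact: leq_trans hle r'X'.
case/imsetP: hY' => Y; rewrite inE => /andP [hY _] hYeq.
rewrite hYeq in hfY' lA'.
set A := Y :\ e in hfY' lA'.
have hfA := hfY'.
have sY := T_sub hT hY.
have rf : 3 <= tangle_rank E r theta Tg (f |: X') by rewrite -rX'; apply: X'cl.
have hAY : A \subset Y by apply: subsetDl.
have sA : A \subset E by apply: subset_trans hAY sY.
have hAs : A \subset E :\ e by apply: setSD.
have lY : 3 <= conn E r Y by apply: leq_trans rf (TR2 _ _ _ hY (subset_trans hfA hAY)).
have lA : 2 < conn E r A.
  case heY : (e \in Y).
    rewrite ltnNge; apply/negP => hA2.
    have hAT : A \in Tg.
      apply: (TC hT sA _ hY hY); last by rewrite setUid.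
      by apply: leq_ltn_trans hA2 _; apply: leq_trans ht4.
    have := leq_trans (TR2 E r theta hAT hfA) hA2.
    by rewrite leqNgt rf.
  have -> : A = Y by apply/setP => x; rewrite !inE; case: eqVneq => [->|] //=; rewrite heY.
  exact: lY.
have lAA : l' A < conn E r A by apply: leq_ltn_trans lA' lA.
have lY1 : conn E r (e |: A) <= 3 by apply: leq_trans (mc3 hM heE hAs del) _; rewrite addn1 ltnS.
have sY1 : e |: A \subset E by rewrite subUset sub1set heE sA.
have hY1 : e |: A \in Tg.
  apply: (TC hT sY1 _ hY hZ).
    by apply: leq_ltn_trans lY1 _.
  by rewrite subUset sub1set inE heZ orbT; apply: subset_trans hAY (subsetUl _ _).
have hX'Y1 : X' \subset e |: A.
  by apply: subset_trans (subsetUr _ _); apply: subset_trans hfA; apply: subsetUr.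
have hk := K _ hY1 hX'Y1.
have hAZ : A \subset E :\: Z.
  apply/subsetP => g hg; rewrite inE (subsetP sA g hg) andbT; apply/negP => hgZ.
  have hge : g != e by move: hg; rewrite !inE => /andP [].
  have h2 : 2 <= conn E r ((e |: A) :&: Z).
    apply: h3 => //.
    - by apply: subset_trans (subsetIr _ _) sZ.
    - have : [set g; e] \subset (e |: A) :&: Z.
        by rewrite subUset !sub1set !in_setI hgZ heZ setU11 (setU1r e hg).
      by move/subset_leq_card; rewrite cards2 hge.
  have : 4 + 2 <= conn E r (e |: A) + 2 by apply: leq_trans hk; rewrite leq_add2l.
  by rewrite leq_add2r leqNgt (leq_ltn_trans lY1).
have lZ' : conn E r Z <= l' (Z :\ e).
  rewrite lZ; apply: h3' => //.
  - by apply: setSD.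
  - have := cardsD1 e X; rewrite heX => hc.
    have : 2 <= #|X :\ e| by move: cX; rewrite hc.
    by move/leq_trans; apply; apply: subset_leq_card; apply: setSD.
  - by rewrite (ns1 heE heZ sZ hAs hAZ).
exact: (mfinal hM heE heZ sZ hAs hAZ lAA lZ').
Qed.
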